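(* Let $d,m,n\ge1$, $\alpha=\omega^d\cdot m$, $k\ge1$, $i\ge0$. Suppose that $(X_\ell:\ell<2^in-2^i+1)$ is a stack of $(\alpha,k,i)$-persistent sets. Then $\bigcup_\ell X_\ell$ is $(\alpha\cdot n,k,i)$-persistent, where $\alpha\cdot n$ denotes $\omega^d\cdot(mn)$.
   Context: Strings are finite binary strings with $\preceq$ the initial-segment order; $2^i$ also denotes the set of strings of length $i$; a tree is a set of strings closed under initial segments; a leaf of a finite tree is a $\preceq$-maximal element. For finite $X=\{x_0<\dots<x_n\}$, a finite tree $T$ is $X$-quasistrong if $T\cap 2^{x_i}\ne\emptyset$ for all $i\le n$ and for each $i<n$ every $\sigma\in T\cap2^{x_i}$ has exactly two incompatible extensions in $T\cap 2^{x_{i+1}}$. A stack is a sequence $(X_\ell:\ell<N)$ of nonempty finite sets with $\max X_\ell<\min X_{\ell+1}$. Largeness: $X$ is $\omega$-large if $|X|>\min X$; $X$ is $\omega^d\cdot n$-large if it is the union of a stack of $n$ many $\omega^d$-large sets; $X$ is $\omega^{d+1}$-large if $X=\{\min X\}\cup X_1$ with $\min X_1>\min X$ and $X_1$ $\omega^d\cdot\min X$-large. Persistence ($d,m,k\ge1$, $\alpha=\omega^d\cdot m$, $X$ nonempty finite): $X$ is $(\alpha,k,0)$-persistent iff $\alpha$-large; for $i\ge1$, $X$ is $(\alpha,k,i)$-persistent iff $X$ contains an $(\alpha,k,i-1)$-persistent subset $Y$ such that for every $X$-quasistrong tree $T$ and every $C:T\cap 2^{\max X}\to k$ there exist $c<k$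 and a $Y$-quasistrong finite tree $S\subseteq T$ all of whose leaves have extensions in $C^{-1}(c)$. *)

(* Defs.v *)
From mathcomp Require Import all_boot.
Set Implicit Arguments. Unset Strict Implicit. Unset Printing Implicit Defensive.

(* Conventions:
   - binary strings are [seq bool]; [prefix s t] is the initial-segment order s ⪯ t;
   - a nonempty finite set of naturals X = {x_0 < ... < x_n} is represented by the
     strictly increasing sequence [:: x_0; ...; x_n] (so min X = head, max X = last);
   - a finite set of strings (e.g. a finite tree) is a [seq (seq bool)] (membership \in). *)

Definition string := seq bool.

Definition nat_set (X : seq nat) : Prop := sorted ltn X.

Definition set_min (X : seq nat) : nat := head 0 X.
Definition set_max (X : seq nat) : nat := last 0 X.

Definition is_stack (Xs : seq (seq nat)) : Prop :=
  (forall X, X \in Xs -> X != [::] /\ nat_set X) /\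
  (forall l, l.+1 < size Xs ->
     set_max (nth [::] Xs l) < set_min (nth [::] Xs l.+1)).

(* wl d X  <->  X is omega^(d+1)-large.
   omega-large: |X| > min X.
   omega^(d+2)-large: X = {min X} ∪ X1, X1 nonempty with min X1 > min X, and X1 is
   omega^(d+1)·(min X)-large, i.e. the union of a stack of (min X) many
   omega^(d+1)-large sets. *)
Fixpoint wl (d : nat) (X : seq nat) {struct d} : Prop :=
  match d with
  | 0 => set_min X < size X
  | d'.+1 =>
      match X with
      | [::] => False
      | x :: X1 =>
          X1 != [::] /\ x < head 0 X1 /\
          exists Ys : seq (seq nat),
            [/\ size Ys = x, is_stack Ys,
                (forall Y, Y \in Ys -> wl d' Y) & flatten Ys = X1]
      end
  end.

(* omega^d-large, for d >= 1 *)
Definition omega_large (d : nat) (X : seq nat) : Prop := wl d.-1 X.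

Definition large (d m : nat) (X : seq nat) : Prop :=
  exists Ys : seq (seq nat),
    [/\ size Ys = m, is_stack Ys,
        (forall Y, Y \in Ys -> omega_large d Y) & flatten Ys = X].

Definition is_tree (T : seq string) : Prop :=
  forall t, t \in T -> forall s, prefix s t -> s \in T.

Definition incompatible (s t : string) : bool := ~~ prefix s t && ~~ prefix t s.

Definition leaf (T : seq string) (s : string) : Prop :=
  s \in T /\ forall t, t \in T -> prefix s t -> t = s.

Definition quasistrong (X : seq nat) (T : seq string) : Prop :=
  is_tree T /\
  (forall x, x \in X -> exists s, s \in T /\ size s = x) /\
  (forall j, j.+1 < size X ->
     forall s, s \in T -> size s = nth 0 X j ->
       exists t1 t2,
         [/\ t1 \in T, t2 \in T, size t1 = nth 0 X j.+1, size t2 = nth 0 X j.+1 &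
         [/\ prefix s t1, prefix s t2, t1 != t2, incompatible t1 t2 &
             forall t, t \in T -> size t = nth 0 X j.+1 -> prefix s t ->
               t = t1 \/ t = t2]]).

Fixpoint persistent (d m k i : nat) (X : seq nat) {struct i} : Prop :=
  match i with
  | 0 => large d m X
  | i'.+1 =>
      exists Y : seq nat,
        [/\ nat_set Y, Y != [::], {subset Y <= X}, persistent d m k i' Y &
        forall T : seq string, quasistrong X T ->
          forall C : string -> 'I_k,
            exists (c : 'I_k) (S : seq string),
              [/\ {subset S <= T}, quasistrong Y S &
                  forall s, leaf S s ->
                    exists t, [/\ t \in T, size t = set_max X, prefix s t & C t = c]]]
  end.

(* Main.v *)
Require Import Defs.
From mathcomp Require Import all_boot zify.
From Stdlib Require Import IndefiniteDescription.
Set Implicit Arguments. Unset Strict Implicit. Unset Printing Implicit Defensive.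

Lemma choice_fun (A B : Type) (P : A -> B -> Prop) :
  (forall a, exists b, P a b) -> exists f : A -> B, forall a, P a (f a).
Proof.
move=> H; exists (fun a => proj1_sig (constructive_indefinite_description _ (H a))).
by move=> a; case: (constructive_indefinite_description _ (H a)).
Qed.

Section Pre.
Implicit Types s t u : string.

Lemma pre_size s t : prefix s t -> size s <= size t.
Proof. by case/prefixP=> w ->; rewrite size_cat leq_addr. Qed.

Lemma pre_eq s t : prefix s t -> size t <= size s -> s = t.
Proof.
case/prefixP=> w ->; rewrite size_cat -{2}(addn0 (size s)) leq_add2l leqn0.
by move/nilP->; rewrite cats0.
Qed.

Lemma pre_take n t : prefix (take n t) t.
Proof. by rewrite -{2}(cat_take_drop n t) prefix_prefix. Qed.

Lemma pre_comm s u t : prefix s t -> prefix u t -> size s <= size u -> prefix s u.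
Proof.
rewrite !prefixE => /eqP Hs /eqP Hu H.
by rewrite -Hu take_takel // Hs.
Qed.

Lemma pre_same s u t : prefix s t -> prefix u t -> size s = size u -> s = u.
Proof.
move=> H1 H2 E; apply: pre_eq; first by apply: pre_comm H1 H2 _; rewrite E.
by rewrite E.
Qed.

Definition cmpb s t := prefix s t || prefix t s.

Lemma comp_pre s t : cmpb s t -> size s <= size t -> prefix s t.
Proof.
case/orP => // H Hs; have := pre_eq H; rewrite Hs => /(_ isT) ->; exact: prefix_refl.
Qed.

Lemma incomp s t : size s = size t -> s != t -> incompatible s t.
Proof.
move=> E N; rewrite /incompatible; apply/andP; split; apply/negP => H.
  by move: N; rewrite (pre_eq H) ?E ?eqxx.
by move: N; rewrite (pre_eq H) ?E ?eqxx.
Qed.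

End Pre.

Lemma below_leaf (S : seq string) s : s \in S -> exists l, leaf S l /\ prefix s l.
Proof.
move=> Hs.
pose P := [seq t <- S | prefix s t].
have HsP : s \in P by rewrite mem_filter prefix_refl Hs.
have [l [Hl Hmax]] : exists l, l \in P /\ forall t, t \in P -> size t <= size l.
  have : P != [::] by case: P HsP.
  clear HsP; case: P => // p0 P0 _.
  elim: P0 p0 => [|p1 P1 IH] p0.
    by exists p0; split; [rewrite mem_head | move=> t; rewrite inE => /eqP ->].
  case: (leqP (size p1) (size p0)) => H.
    have [l [Hl Hm]] := IH p0; exists l; split.
      by move: Hl; rewrite !inE => /orP[->|->]; rewrite ?orbT.
    move=> t; rewrite !inE => /orP[/eqP ->|/orP[/eqP ->|Ht]].
    - by apply: Hm; rewrite mem_head.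
    - by apply: leq_trans H (Hm _ (mem_head _ _)).
    - by apply: Hm; rewrite inE Ht orbT.
  have [l [Hl Hm]] := IH p1; exists l; split.
    by move: Hl; rewrite !inE => /orP[->|->]; rewrite ?orbT.
  move=> t; rewrite !inE => /orP[/eqP ->|/orP[/eqP ->|Ht]].
  - by apply: leq_trans (ltnW H) (Hm _ (mem_head _ _)).
  - by apply: Hm; rewrite mem_head.
  - by apply: Hm; rewrite inE Ht orbT.
move: Hl; rewrite mem_filter => /andP[Hsl HlS].
exists l; split => //; split => // t Ht Hlt.
have HtP : t \in P by rewrite mem_filter Ht (prefix_trans Hsl Hlt).
by apply/esym/pre_eq => //; apply: Hmax.
Qed.

Lemma srt_le_last (s : seq nat) x : sorted ltn s -> x \in s -> x <= last 0 s.
Proof.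
case: s => // a s; elim: s a x => [|b s IH] a x /=.
  by rewrite inE => _ /eqP ->.
case/andP=> Hab Hs; rewrite inE => /orP[/eqP ->|Hx].
  by apply: leq_trans (ltnW Hab) (IH b b Hs (mem_head _ _)).
exact: IH Hs Hx.
Qed.

Lemma srt_head_le (s : seq nat) x : sorted ltn s -> x \in s -> head 0 s <= x.
Proof.
case: s => // a s /= Hs; rewrite inE => /orP[/eqP ->//|Hx].
have := order_path_min ltn_trans Hs => /allP /(_ x Hx); exact: ltnW.
Qed.

Lemma srt_cat (A W : seq nat) : sorted ltn (A ++ W) -> A != [::] -> W != [::] ->
  last 0 A < head 0 W.
Proof.
case: A => // a A; case: W => // w W /=; rewrite cat_path => /andP[_].
by case/andP.
Qed.

Lemma srt_catl (A W : seq nat) : sorted ltn (A ++ W) -> sorted ltn A.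
Proof. by case/cat_sorted2. Qed.
Lemma srt_catr (A W : seq nat) : sorted ltn (A ++ W) -> sorted ltn W.
Proof. by case/cat_sorted2. Qed.

Lemma srt_nth (s : seq nat) i j : sorted ltn s -> i < j -> j < size s ->
  nth 0 s i < nth 0 s j.
Proof.
move=> Hs Hij Hj; apply: (sorted_ltn_nth ltn_trans) => //; rewrite inE //.
exact: ltn_trans Hij Hj.
Qed.

Lemma qs_ext W T s j j' : quasistrong W T -> s \in T -> size s = nth 0 W j ->
  j <= j' -> j' < size W ->
  exists t, [/\ t \in T, size t = nth 0 W j' & prefix s t].
Proof.
move=> [_ [_ Hsp]] Hs Hsz Hjj'; rewrite -(subnK Hjj'); elim: (j' - j) => [|n IH].
  by move=> _; exists s; split => //; exact: prefix_refl.
move=> Hn; have [t [Ht Htz Hst]] := IH (ltnW Hn).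
have [t1 [t2 [H1 _ H1z _ [Hp1 _ _ _ _]]]] := Hsp _ Hn t Ht Htz.
by exists t1; split => //; exact: prefix_trans Hst Hp1.
Qed.

Lemma qs_take W B T : quasistrong (W ++ B) T -> quasistrong W T.
Proof.
move=> [Htr [Hnd Hsp]]; split => //; split.
  by move=> x Hx; apply: Hnd; rewrite mem_cat Hx.
move=> j Hj; have := Hsp j; rewrite size_cat !nth_cat Hj (ltnW Hj).
by move=> H; apply: H; apply: leq_trans Hj (leq_addr _ _).
Qed.

Lemma comp_sym s t : cmpb s t = cmpb t s.
Proof. by rewrite /cmpb orbC. Qed.

Lemma comp_tree T r : is_tree T -> is_tree [seq t <- T | cmpb r t].
Proof.
move=> Htr t; rewrite mem_filter => /andP[Hc Ht] s Hst.
rewrite mem_filter (Htr _ Ht _ Hst) andbT.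
case/orP: Hc => Hrt.
  case: (leqP (size r) (size s)) => H.
    by rewrite /cmpb (pre_comm Hrt Hst H).
  by rewrite /cmpb (pre_comm Hst Hrt (ltnW H)) orbT.
by rewrite /cmpb (prefix_trans Hst Hrt) orbT.
Qed.

Lemma qs_restr A W T sg : sorted ltn (A ++ W) -> A != [::] -> quasistrong (A ++ W) T ->
  sg \in T -> size sg = last 0 A -> quasistrong W [seq t <- T | cmpb sg t].
Proof.
move=> Hsrt HA Hq Hsg Hsz.
have HszA : size sg = nth 0 (A ++ W) (size A).-1.
  by rewrite nth_cat prednK ?lt0n ?size_eq0 // leqnn nth_last.
have Hlt : forall j, j < size W -> size sg < nth 0 (A ++ W) (size A + j).
  move=> j Hj; rewrite HszA; apply: srt_nth => //.
    apply: (@leq_trans (size A)); last exact: leq_addr.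
    by rewrite prednK ?lt0n ?size_eq0.
  by rewrite size_cat ltn_add2l.
have [Htr [Hnd Hsp]] := Hq.
split; first exact: comp_tree.
split.
  move=> x /(nthP 0) [j Hj <-].
  have Hjs : size A + j < size (A ++ W) by rewrite size_cat ltn_add2l.
  have [t [Ht Htz Hst]] := @qs_ext _ _ _ _ (size A + j) Hq Hsg HszA
    (leq_trans (leq_pred _) (leq_addr _ _)) Hjs.
  exists t; rewrite mem_filter Ht /cmpb Hst; split => //.
  by rewrite Htz nth_cat ltnNge leq_addr /= addKn.
move=> j Hj s; rewrite mem_filter => /andP[Hc Hs] Hsz'.
have Hj' : (size A + j).+1 < size (A ++ W) by rewrite size_cat -addnS ltn_add2l.
have Hszs : size s = nth 0 (A ++ W) (size A + j)
  by rewrite nth_cat ltnNge leq_addr /= addKn.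
have Hsgs : prefix sg s.
  apply: comp_pre => //; rewrite Hszs; apply: ltnW; apply: Hlt; exact: ltnW.
have [t1 [t2 [H1 H2 H1z H2z [Hp1 Hp2 Hne Hinc Huniq]]]] := Hsp _ Hj' s Hs Hszs.
have E : nth 0 (A ++ W) (size A + j).+1 = nth 0 W j.+1
  by rewrite -addnS nth_cat ltnNge leq_addr /= addKn.
exists t1, t2; split.
- by rewrite mem_filter H1 /cmpb (prefix_trans Hsgs Hp1).
- by rewrite mem_filter H2 /cmpb (prefix_trans Hsgs Hp2).
- by rewrite H1z E.
- by rewrite H2z E.
split => // t; rewrite mem_filter => /andP[_ Ht] Htz; apply: Huniq => //.
by rewrite Htz E.
Qed.

Definition good k (Z Y : seq nat) :=
  forall T : seq string, quasistrong Z T ->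
  forall C : string -> 'I_k,
    exists (c : 'I_k) (S : seq string),
      [/\ {subset S <= T}, quasistrong Y S &
          forall s, leaf S s ->
            exists t, [/\ t \in T, size t = set_max Z, prefix s t & C t = c]].

Lemma last_ne (R : seq nat) x y : R != [::] -> last x R = last y R.
Proof. by case: R. Qed.

Lemma head_in (s : seq nat) : s != [::] -> head 0 s \in s.
Proof. by case: s => // a s _; exact: mem_head. Qed.
Lemma last_in (s : seq nat) : s != [::] -> last 0 s \in s.
Proof. by case: s => // a s _; exact: mem_last. Qed.

Lemma glue k B0 B1 R Y0 Y1 YR :
  sorted ltn (B0 ++ B1 ++ R) -> B0 != [::] -> B1 != [::] -> R != [::] ->
  sorted ltn Y0 -> Y0 != [::] -> {subset Y0 <= B0} ->
  1 < size Y1 ->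
  sorted ltn YR -> YR != [::] -> {subset YR <= R} ->
  good k B0 Y0 -> good k B1 Y1 -> good k R YR ->
  good k (B0 ++ B1 ++ R) (Y0 ++ YR).
Proof.
move=> Hsrt HB0 HB1 HR HY0s HY0 HY0B HY1 HYRs HYR HYRR G0 G1 GR T HqT C.
have Hs01 : sorted ltn (B0 ++ B1) by move: Hsrt; rewrite catA => /srt_catl.
have Hs1R : sorted ltn (B1 ++ R) by move: Hsrt => /srt_catr.
have Hs0 : sorted ltn B0 by move: Hs01 => /srt_catl.
have Hs1 : sorted ltn B1 by move: Hs01 => /srt_catr.
have HsR : sorted ltn R by move: Hs1R => /srt_catr.
have hB0B1 : last 0 B0 < last 0 B1.
  apply: leq_trans (srt_cat Hs01 HB0 HB1) _.
  exact: srt_le_last Hs1 (head_in HB1).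
have hB1R : last 0 B1 < head 0 YR.
  apply: leq_trans (srt_cat Hs1R HB1 HR) _.
  exact: srt_head_le HsR (HYRR _ (head_in HYR)).
have hY0 : last 0 Y0 <= last 0 B0.
  exact: srt_le_last Hs0 (HY0B _ (last_in HY0)).
have hY0YR : last 0 Y0 < head 0 YR.
  exact: leq_ltn_trans hY0 (ltn_trans hB0B1 hB1R).
have hmaxZ : set_max (B0 ++ B1 ++ R) = last 0 R.
  by rewrite /set_max !last_cat; apply: last_ne.
have HtrT : is_tree T by case: HqT.
pose Rs (tau : string) := [seq t <- T | cmpb tau t].
have /choice_fun [F1 HF1] : forall tau : string, exists p : 'I_k * seq string,
   tau \in T -> size tau = last 0 B1 ->
   [/\ {subset p.2 <= Rs tau}, quasistrong YR p.2 &
     forall s, leaf p.2 s -> exists t, [/\ t \in Rs tau, size t = last 0 R, prefix s t & C t = p.1]].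
  move=> tau; case: (boolP ((tau \in T) && (size tau == last 0 B1))) => [/andP[Htau /eqP Hsz]|Hn]; last first.
    by exists (C [::], [::]) => Htau Hsz; move: Hn; rewrite Htau Hsz eqxx.
  have Hq : quasistrong R (Rs tau).
    apply: (@qs_restr (B0 ++ B1)) => //; first by rewrite -catA.
    - by case: (B0) HB0.
    - by rewrite -catA.
    - by rewrite Hsz last_cat; apply: last_ne.
  have [c [S [H1 H2 H3]]] := GR _ Hq C.
  by exists (c, S) => _ _; split.
have /choice_fun [F2 HF2] : forall sg : string, exists p : 'I_k * (string * string),
   sg \in T -> size sg = last 0 B0 ->
   [/\ p.2.1 \in T, p.2.2 \in T, size p.2.1 = last 0 B1, size p.2.2 = last 0 B1 &
     [/\ prefix sg p.2.1, prefix sg p.2.2, p.2.1 != p.2.2, (F1 p.2.1).1 = p.1 & (F1 p.2.2).1 = p.1]].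
  move=> sg; case: (boolP ((sg \in T) && (size sg == last 0 B0))) => [/andP[Hsg /eqP Hsz]|Hn]; last first.
    by exists (C [::], ([::], [::])) => Hsg Hsz; move: Hn; rewrite Hsg Hsz eqxx.
  have Hq : quasistrong B1 (Rs sg).
    by apply: (@qs_take _ R); apply: (@qs_restr B0).
  have [e [S [HS HqS Hl]]] := G1 _ Hq (fun t => (F1 t).1).
  have [_ [Hnd Hsp]] := HqS.
  have [rho [Hrho Hrhoz]] := Hnd (nth 0 Y1 0) (mem_nth 0 (ltnW HY1)).
  have [r1 [r2 [Hr1 Hr2 Hr1z Hr2z [_ _ Hne _ _]]]] := Hsp 0 HY1 rho Hrho Hrhoz.
  have [l1 [Hl1 Hp1]] := below_leaf Hr1.
  have [l2 [Hl2 Hp2]] := below_leaf Hr2.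
  have [t1 [Ht1 Ht1z Hq1 Hc1]] := Hl _ Hl1.
  have [t2 [Ht2 Ht2z Hq2 Hc2]] := Hl _ Hl2.
  move: Ht1 Ht2; rewrite !mem_filter => /andP[Hc1' Ht1] /andP[Hc2' Ht2].
  exists (e, (t1, t2)) => _ _ /=; split => //.
  split => //.
  - by apply: comp_pre Hc1' _; rewrite Hsz Ht1z; exact: ltnW.
  - by apply: comp_pre Hc2' _; rewrite Hsz Ht2z; exact: ltnW.
  - apply/eqP => E; move/eqP: Hne; apply.
    apply: pre_same (prefix_trans Hp1 Hq1) _ _; last by rewrite Hr1z Hr2z.
    by rewrite E; exact: prefix_trans Hp2 Hq2.
have HqB0 : quasistrong B0 T by apply: qs_take HqT.
have [cs [S0 [HS0T HqS0 HlS0]]] := G0 _ HqB0 (fun sg => (F2 sg).1).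
have /choice_fun [F3 HF3] : forall u : string, exists sg : string, u \in S0 ->
    [/\ sg \in T, size sg = last 0 B0, prefix u sg & (F2 sg).1 = cs].
  move=> u; case: (boolP (u \in S0)) => Hu; last by exists u.
  have [l [Hl Hul]] := below_leaf Hu.
  have [sg [Hsg Hsgz Hlsg Hc]] := HlS0 _ Hl.
  by exists sg => _; split => //; exact: prefix_trans Hul Hlsg.
have /choice_fun [Rt HRt] : forall tau : string, exists r : string, tau \in T -> size tau = last 0 B1 ->
    r \in (F1 tau).2 /\ size r = head 0 YR.
  move=> tau; case: (boolP ((tau \in T) && (size tau == last 0 B1))) => [/andP[Htau /eqP Hsz]|Hn]; last first.
    by exists [::] => Htau Hsz; move: Hn; rewrite Htau Hsz eqxx.
  have [_ Hq _] := HF1 tau Htau Hsz.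
  have [_ [Hnd _]] := Hq.
  have [r [Hr Hrz]] := Hnd _ (head_in HYR).
  by exists r.
have Htau : forall tau, tau \in T -> size tau = last 0 B1 ->
  [/\ {subset (F1 tau).2 <= T}, quasistrong YR (F1 tau).2, (forall s, s \in (F1 tau).2 -> cmpb tau s),
      Rt tau \in (F1 tau).2 & [/\ size (Rt tau) = head 0 YR, prefix tau (Rt tau), Rt tau \in T &
      forall s, leaf (F1 tau).2 s -> exists t, [/\ t \in T, size t = last 0 R, prefix s t & C t = (F1 tau).1]]].
  move=> tau Htau Hsz; have [Hsub Hq Hl] := HF1 tau Htau Hsz; have [Hr Hrz] := HRt tau Htau Hsz.
  have HsubT : {subset (F1 tau).2 <= T} by move=> s /Hsub; rewrite mem_filter => /andP[].
  have Hcmp : forall s, s \in (F1 tau).2 -> cmpb tau s by move=> s /Hsub; rewrite mem_filter => /andP[].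
  split => //; split => //.
  - apply: comp_pre (Hcmp _ Hr) _; rewrite Hsz Hrz; exact: ltnW.
  - exact: HsubT _ Hr.
  - move=> s /Hl [t [Ht Htz Hst Hc]]; exists t; split => //; by move: Ht; rewrite mem_filter => /andP[].
pose top := [seq u <- S0 | size u == last 0 Y0].
pose ts (u : string) := [:: (F2 (F3 u)).2.1; (F2 (F3 u)).2.2].
pose Pt (tau : string) := [seq t <- (F1 tau).2 | cmpb (Rt tau) t].
pose inS (t : string) := ((t \in S0) && (size t <= last 0 Y0) && has (prefix t) top)
   || has (fun u => has (fun tau => t \in Pt tau) (ts u)) top.
pose S := [seq t <- T | inS t].
have Htop : forall u tau, u \in top -> tau \in ts u ->
   [/\ tau \in T, size tau = last 0 B1, prefix u tau & (F1 tau).1 = cs].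
  move=> u ta; rewrite mem_filter => /andP[/eqP Huz Hu].
  have [Hsg Hsgz Husg Hc] := HF3 u Hu.
  have [H1 H2 H1z H2z [Hp1 Hp2 _ Hc1 Hc2]] := HF2 _ Hsg Hsgz.
  rewrite !inE => /orP[/eqP->|/eqP->]; split => //.
  - exact: prefix_trans Husg Hp1.
  - by rewrite Hc1.
  - exact: prefix_trans Husg Hp2.
  - by rewrite Hc2.

have Hne_ts : forall u, u \in top -> (F2 (F3 u)).2.1 != (F2 (F3 u)).2.2.
  move=> u; rewrite mem_filter => /andP[_ Hu]; have [Hsg Hsgz _ _] := HF3 u Hu.
  by have [_ _ _ _ [_ _ Hn _ _]] := HF2 _ Hsg Hsgz.
have HtrS0 : is_tree S0 by case: HqS0.
have HmemS : forall t, (t \in S) = (t \in T) && inS t by move=> t; rewrite mem_filter andbC.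
have HRtS : forall u ta, u \in top -> ta \in ts u -> Rt ta \in S.
  move=> u ta Hu Ht; have [HtT Htz _ _] := Htop u ta Hu Ht.
  have [_ _ _ Hr [_ _ HrT _]] := Htau ta HtT Htz.
  rewrite HmemS HrT /=; apply/orP; right; apply/hasP; exists u => //; apply/hasP; exists ta => //.
  by rewrite mem_filter /cmpb prefix_refl Hr.
have Hlow : forall t, t \in S -> size t <= last 0 Y0 ->
    t \in S0 /\ exists2 u, u \in top & prefix t u.
  move=> t; rewrite HmemS => /andP[HtT /orP[/andP[/andP[Ht0 _] /hasP[u Hu Htu]]|/hasP[u Hu /hasP[ta Hta HtP]]]] Hsz.
    by split => //; exists u.
  have [HtaT Htaz Huta _] := Htop u ta Hu Hta.
  have [_ _ _ Hr [Hrz Htar _ _]] := Htau ta HtaT Htaz.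
  move: HtP; rewrite mem_filter => /andP[Hc Ht1].
  have Htr : prefix t (Rt ta).
    apply: comp_pre; first by rewrite comp_sym.
    by rewrite Hrz; apply: ltnW; apply: leq_ltn_trans Hsz hY0YR.
  have Hur : prefix u (Rt ta) := prefix_trans Huta Htar.
  move: (Hu); rewrite mem_filter => /andP[/eqP Huz HuS0].
  have Htu : prefix t u by apply: pre_comm Htr Hur _; rewrite Huz.
  by split; [exact: HtrS0 _ HuS0 _ Htu | exists u].
have Hhigh : forall t, t \in S -> last 0 Y0 < size t ->
    exists u ta, [/\ u \in top, ta \in ts u, t \in (F1 ta).2 & cmpb (Rt ta) t].
  move=> t; rewrite HmemS => /andP[HtT /orP[/andP[/andP[_ Hle] _]|/hasP[u Hu /hasP[ta Hta HtP]]]] Hsz.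
    by move: Hsz; rewrite ltnNge Hle.
  by exists u, ta; move: HtP; rewrite mem_filter => /andP[Hc Ht]; split.
have Hle : forall i, i < size Y0 -> nth 0 Y0 i <= last 0 Y0.
  by move=> i Hi; apply: srt_le_last HY0s (mem_nth 0 Hi).
have [u0 Hu0] : exists u0, u0 \in top.
  have [_ [Hnd _]] := HqS0; have [u [Hu Huz]] := Hnd _ (last_in HY0).
  by exists u; rewrite mem_filter Huz eqxx.
exists cs, S; split.
- by move=> t; rewrite HmemS => /andP[].
- split.
    move=> t HtS s Hst.
    have HtT : t \in T by rewrite HmemS in HtS; case/andP: HtS.
    have HsT := HtrT _ HtT _ Hst.
    rewrite HmemS HsT /=.
    move: HtS; rewrite HmemS HtT /= => /orP[/andP[/andP[Ht0 Hle'] /hasP[u Hu Htu]]|/hasP[u Hu /hasP[ta Hta HtP]]].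
      apply/orP; left; rewrite (HtrS0 _ Ht0 _ Hst) (leq_trans (pre_size Hst) Hle') /=.
      by apply/hasP; exists u => //; exact: prefix_trans Hst Htu.
    apply/orP; right; apply/hasP; exists u => //; apply/hasP; exists ta => //.
    have [HtaT Htaz _ _] := Htop u ta Hu Hta.
    have [_ Hq _ _ _] := Htau ta HtaT Htaz.
    have [Htr1 _] := Hq.
    exact: comp_tree Htr1 _ HtP _ Hst.
  split.
    move=> x; rewrite mem_cat => /orP[Hx|Hx].
      move: (Hu0); rewrite mem_filter => /andP[/eqP Hu0z Hu0S].
      have Hxle : x <= size u0 by rewrite Hu0z; apply: srt_le_last.
      have Hp := pre_take x u0.
      have Hin0 := HtrS0 _ Hu0S _ Hp.
      exists (take x u0); split; last by rewrite size_takel.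
      rewrite HmemS (HS0T _ Hin0) /=; apply/orP; left; rewrite Hin0 size_takel // -Hu0z Hxle /=.
      by apply/hasP; exists u0.
    have Hta : (F2 (F3 u0)).2.1 \in ts u0 by rewrite mem_head.
    have [HtaT Htaz _ _] := Htop u0 _ Hu0 Hta.
    have [HsubT Hq _ Hr [Hrz _ _ _]] := Htau _ HtaT Htaz.
    move: Hx => /(nthP 0) [j Hj <-].
    have Hrz0 : size (Rt (F2 (F3 u0)).2.1) = nth 0 YR 0 by rewrite Hrz nth0.
    have [v [Hv Hvz Hrv]] := qs_ext Hq Hr Hrz0 (leq0n j) Hj.
    exists v; split => //.
    rewrite HmemS (HsubT _ Hv) /=; apply/orP; right; apply/hasP; exists u0 => //; apply/hasP.
    by exists (F2 (F3 u0)).2.1 => //; rewrite mem_filter /cmpb Hrv Hv.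
  move=> j Hj s HsS Hsz.
  have HsT : s \in T by move: HsS; rewrite HmemS => /andP[].
  rewrite size_cat in Hj.
  case: (ltngtP j.+1 (size Y0)) => Hjc.
  + have Ej : nth 0 (Y0 ++ YR) j = nth 0 Y0 j by rewrite nth_cat (ltnW Hjc).
    have Ej1 : nth 0 (Y0 ++ YR) j.+1 = nth 0 Y0 j.+1 by rewrite nth_cat Hjc.
    rewrite Ej in Hsz; rewrite !Ej1.
    have Hsle : size s <= last 0 Y0 by rewrite Hsz; apply: Hle; exact: ltnW Hjc.
    have [HsInS0 _] := Hlow s HsS Hsle.
    have [_ [_ Hsp0]] := HqS0.
    have [t1 [t2 [H1 H2 H1z H2z [Hp1 Hp2 Hne Hinc Hun]]]] := Hsp0 j Hjc s HsInS0 Hsz.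
    have Hin : forall t, t \in S0 -> size t = nth 0 Y0 j.+1 -> t \in S.
      move=> t Ht Htz.
      have Hj1 : j.+1 <= (size Y0).-1 by rewrite -ltnS prednK // (leq_ltn_trans _ Hjc).
      have Hj2 : (size Y0).-1 < size Y0 by rewrite prednK // (leq_ltn_trans _ Hjc).
      have [u [Hu Huz Htu]] := qs_ext HqS0 Ht Htz Hj1 Hj2.
      rewrite HmemS (HS0T _ Ht) /=; apply/orP; left; rewrite Ht Htz Hle //=; apply/hasP; exists u => //.
      by rewrite mem_filter Huz nth_last eqxx.
    exists t1, t2; split => //; first exact: Hin H1 H1z; first exact: Hin H2 H2z.
    split => // t HtS Htz Hst; apply: Hun => //.
    have Hle' : size t <= last 0 Y0 by rewrite Htz; apply: Hle.
    by have [] := Hlow t HtS Hle'.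
  + have Hj0 : size Y0 <= j := Hjc.
    have Ej : nth 0 (Y0 ++ YR) j = nth 0 YR (j - size Y0) by rewrite nth_cat ltnNge Hj0.
    have Ej1 : nth 0 (Y0 ++ YR) j.+1 = nth 0 YR (j - size Y0).+1
      by rewrite nth_cat ltnNge (leqW Hj0) /= subSn.
    rewrite Ej in Hsz; rewrite !Ej1.
    have Hj' : (j - size Y0).+1 < size YR by move: Hj Hj0; clear; lia.
    have HheadYR : head 0 YR <= nth 0 YR (j - size Y0)
      by apply: srt_head_le HYRs (mem_nth 0 (ltnW Hj')).
    have HheadYR' : head 0 YR <= nth 0 YR (j - size Y0).+1
      by apply: srt_head_le HYRs (mem_nth 0 Hj').
    have Hgt : last 0 Y0 < size s by rewrite Hsz; apply: leq_trans hY0YR HheadYR.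
    have [u [ta [Hu Hta HsIn1 Hc]]] := Hhigh s HsS Hgt.
    have [HtaT Htaz _ _] := Htop u ta Hu Hta.
    have [HsubT Hq Hcmp Hr [Hrz Htar HrT _]] := Htau ta HtaT Htaz.
    have Hrs : prefix (Rt ta) s by apply: comp_pre Hc _; rewrite Hrz Hsz.
    have [_ [_ Hsp]] := Hq.
    have [t1 [t2 [H1 H2 H1z H2z [Hp1 Hp2 Hne Hinc Hun]]]] := Hsp _ Hj' s HsIn1 Hsz.
    have Hin : forall t, t \in (F1 ta).2 -> prefix s t -> t \in S.
      move=> t Ht Hst; rewrite HmemS (HsubT _ Ht) /=; apply/orP; right; apply/hasP; exists u => //.
      by apply/hasP; exists ta => //; rewrite mem_filter /cmpb (prefix_trans Hrs Hst) Ht.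
    exists t1, t2; split => //; first exact: Hin H1 Hp1; first exact: Hin H2 Hp2.
    split => // t HtS Htz Hst.
    have Hgt' : last 0 Y0 < size t by apply: leq_trans Hgt (pre_size Hst).
    have [u' [ta' [Hu' Hta' Ht1 Hc']]] := Hhigh t HtS Hgt'.
    have [HtaT' Htaz' _ _] := Htop u' ta' Hu' Hta'.
    have [_ _ _ _ [Hrz' Htar' _ _]] := Htau ta' HtaT' Htaz'.
    have Hrt' : prefix (Rt ta') t by apply: comp_pre Hc' _; rewrite Hrz' Htz.
    have Erta : Rt ta = Rt ta' by apply: pre_same (prefix_trans Hrs Hst) Hrt' _; rewrite Hrz Hrz'.
    have Eta : ta = ta'.
      apply: pre_same Htar _ _; last by rewrite Htaz Htaz'.
      by rewrite Erta.
    by apply: Hun => //; rewrite Eta.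
  + have Ej : nth 0 (Y0 ++ YR) j = last 0 Y0 by rewrite nth_cat -nth_last -Hjc ltnSn.
    have Ej1 : nth 0 (Y0 ++ YR) j.+1 = head 0 YR by rewrite nth_cat -Hjc ltnn subnn nth0.
    rewrite Ej in Hsz; rewrite !Ej1.
    have Hsle : size s <= last 0 Y0 by rewrite Hsz.
    have [HsInS0 _] := Hlow s HsS Hsle.
    have Hstop : s \in top by rewrite mem_filter Hsz eqxx HsInS0.
    have Hta1 : (F2 (F3 s)).2.1 \in ts s by rewrite !inE eqxx.
    have Hta2 : (F2 (F3 s)).2.2 \in ts s by rewrite !inE eqxx orbT.
    have [HT1 Hz1 Hp1 _] := Htop s _ Hstop Hta1.
    have [HT2 Hz2 Hp2 _] := Htop s _ Hstop Hta2.
    have [_ _ _ _ [Hrz1 Hr1 _ _]] := Htau _ HT1 Hz1.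
    have [_ _ _ _ [Hrz2 Hr2 _ _]] := Htau _ HT2 Hz2.
    have Hne := Hne_ts s Hstop.
    have Hrne : Rt (F2 (F3 s)).2.1 != Rt (F2 (F3 s)).2.2.
      apply/eqP => E; move/eqP: Hne; apply; apply: pre_same Hr1 _ _; last by rewrite Hz1 Hz2.
      by rewrite E.
    exists (Rt (F2 (F3 s)).2.1), (Rt (F2 (F3 s)).2.2); split => //.
    - exact: HRtS Hstop Hta1.
    - exact: HRtS Hstop Hta2.
    split => //.
    - exact: prefix_trans Hp1 Hr1.
    - exact: prefix_trans Hp2 Hr2.
    - by apply: incomp => //; rewrite Hrz1 Hrz2.
    move=> t HtS Htz Hst.
    have Hgt : last 0 Y0 < size t by rewrite Htz.
    have [u [ta [Hu Hta Ht1 Hc]]] := Hhigh t HtS Hgt.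
    have [HtaT Htaz Huta _] := Htop u ta Hu Hta.
    have [_ _ _ _ [Hrz Htar _ _]] := Htau ta HtaT Htaz.
    have Et : t = Rt ta.
      apply/esym/pre_eq; last by rewrite Hrz Htz.
      by apply: comp_pre Hc _; rewrite Hrz Htz.
    have Eu : u = s.
      apply: pre_same (prefix_trans Huta Htar) _ _; first by rewrite -Et.
      by move: Hu; rewrite mem_filter Hsz => /andP[/eqP].
    move: Hta; rewrite Eu !inE => /orP[/eqP E|/eqP E]; [left|right]; by rewrite Et E.
- move=> s [HsS Hleaf].
  case: (leqP (size s) (last 0 Y0)) => Hsz.
    have [_ [u Hu Hsu]] := Hlow s HsS Hsz.
    have Hta : (F2 (F3 u)).2.1 \in ts u by rewrite !inE eqxx.
    have [HtaT Htaz Huta _] := Htop u _ Hu Hta.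
    have [_ _ _ _ [Hrz Htar _ _]] := Htau _ HtaT Htaz.
    have E := Hleaf _ (HRtS u _ Hu Hta) (prefix_trans Hsu (prefix_trans Huta Htar)).
    by move: Hsz; rewrite -E Hrz leqNgt hY0YR.
  have [u [ta [Hu Hta HsIn1 Hc]]] := Hhigh s HsS Hsz.
  have [HtaT Htaz _ Hcol] := Htop u ta Hu Hta.
  have [HsubT _ _ Hr [_ _ _ Hlf]] := Htau ta HtaT Htaz.
  have Hin : forall t, t \in (F1 ta).2 -> cmpb (Rt ta) t -> t \in S.
    move=> t Ht Hct; rewrite HmemS (HsubT _ Ht) /=; apply/orP; right; apply/hasP; exists u => //.
    by apply/hasP; exists ta => //; rewrite mem_filter Hct Ht.
  have Hl1 : leaf (F1 ta).2 s.
    split => // t Ht Hst.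
    suff HtS : t \in S by exact: Hleaf _ HtS Hst.
    apply: (Hin) Ht _.
    case/orP: Hc => Hrs; first by rewrite /cmpb (prefix_trans Hrs Hst).
    have Hrr : cmpb (Rt ta) (Rt ta) by rewrite /cmpb prefix_refl.
    have E : Rt ta = s := Hleaf _ (Hin _ Hr Hrr) Hrs.
    by rewrite /cmpb E Hst.
  have [t [HtT Htz Hst HCt]] := Hlf s Hl1.
  by exists t; split => //; rewrite ?hmaxZ // HCt Hcol.
Qed.


Lemma srt_catP (A W : seq nat) : sorted ltn A -> sorted ltn W ->
  (A != [::] -> W != [::] -> last 0 A < head 0 W) -> sorted ltn (A ++ W).
Proof.
case: A => [|a A] //= HA HW H; rewrite cat_path HA /=.
case: W HW H => [|w W] //= HW H; rewrite HW andbT; exact: H.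
Qed.

Lemma srt_cat_lt (A W : seq nat) a w : sorted ltn (A ++ W) -> a \in A -> w \in W -> a < w.
Proof.
move=> H Ha Hw.
have HA : A != [::] by case: (A) Ha.
have HW : W != [::] by case: (W) Hw.
apply: leq_ltn_trans (srt_le_last (srt_catl H) Ha) _.
exact: leq_trans (srt_cat H HA HW) (srt_head_le (srt_catr H) Hw).
Qed.

Lemma st_tail X Xs : is_stack (X :: Xs) -> is_stack Xs.
Proof.
move=> [H1 H2]; split.
  by move=> Y HY; apply: H1; rewrite inE HY orbT.
by move=> l Hl; apply: (H2 l.+1).
Qed.

Lemma st_head X Xs : is_stack (X :: Xs) -> X != [::] /\ nat_set X.
Proof. by move=> [H1 _]; apply: H1; exact: mem_head. Qed.

Lemma st_sorted Xs : is_stack Xs -> sorted ltn (flatten Xs).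
Proof.
elim: Xs => [|X Xs IH] //= Hst.
have [HX HXs] := st_head Hst.
apply: srt_catP => //; first exact: IH (st_tail Hst).
case: Xs {IH} Hst => [|Y Ys] // [H1 H2] _ _ /=.
have := H2 0 isT; rewrite /set_max /set_min /=.
have [HY _] : Y != [::] /\ nat_set Y by apply: H1; rewrite !inE eqxx orbT.
by case: (Y) HY.
Qed.

Lemma st_cons_inv X Xs y : is_stack (X :: Xs) -> y \in flatten Xs -> last 0 X < y.
Proof.
move=> Hst Hy; have [HX _] := st_head Hst.
have := st_sorted Hst; rewrite /= => H.
exact: srt_cat_lt H (last_in HX) Hy.
Qed.

Lemma st_cons X Xs : X != [::] -> nat_set X -> is_stack Xs ->
  (forall y, y \in flatten Xs -> last 0 X < y) -> is_stack (X :: Xs).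
Proof.
move=> HX HXs [H1 H2] H; split.
  by move=> Y; rewrite inE => /orP[/eqP ->|/H1].
case=> [|l] /= Hl; last exact: H2.
case: Xs H1 H2 H Hl => // Y Ys H1 _ H _ /=.
have [HY _] := H1 Y (mem_head _ _).
apply: H; rewrite /= mem_cat; apply/orP; left; exact: head_in.
Qed.

Lemma st_cat A B : is_stack A -> is_stack B ->
  (forall x y, x \in flatten A -> y \in flatten B -> x < y) -> is_stack (A ++ B).
Proof.
elim: A => [|X A IH] //= HA HB H.
have [HX HXs] := st_head HA.
apply: st_cons => //.
  apply: IH (st_tail HA) HB _ => x y Hx Hy; apply: H => //.
  by rewrite mem_cat Hx orbT.
move=> y; rewrite flatten_cat mem_cat => /orP[Hy|Hy].
  exact: st_cons_inv HA Hy.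
by apply: H => //; rewrite mem_cat last_in.
Qed.

Lemma large_cat d m Xs : is_stack Xs -> (forall X, X \in Xs -> large d m X) ->
  large d (m * size Xs) (flatten Xs).
Proof.
elim: Xs => [|X Xs IH] Hst H.
  by exists [::]; split => //=; rewrite muln0.
have [Ws [HWs HWst HWl HWf]] := H X (mem_head _ _).
have H' : forall Y, Y \in Xs -> large d m Y by move=> Y HY; apply: H; rewrite inE HY orbT.
have [Zs [HZs HZst HZl HZf]] := IH (st_tail Hst) H'.
exists (Ws ++ Zs); split.
- by rewrite size_cat HWs HZs /= mulnS.
- apply: st_cat => // x y; rewrite HWf HZf => Hx Hy.
  have := st_sorted Hst; rewrite /= => Hs; exact: srt_cat_lt Hs Hx Hy.
- by move=> Y; rewrite mem_cat => /orP[/HWl|/HZl].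
- by rewrite flatten_cat HWf HZf.
Qed.

Lemma persistent_large d m k i Y : persistent d m k i Y ->
  exists L, {subset L <= Y} /\ large d m L.
Proof.
elim: i Y => [|i IH] Y /=.
  by move=> H; exists Y; split.
move=> [Y' [_ _ Hsub Hp _]]; have [L [HL HlL]] := IH _ Hp.
by exists L; split => // x /HL /Hsub.
Qed.

Lemma wl_two d' Z : wl d' Z -> Z != [::] -> (forall x, x \in Z -> 0 < x) -> 1 < size Z.
Proof.
case: d' => [|d'] /=.
  move=> H HZ Hpos; apply: leq_trans H; exact: Hpos _ (head_in HZ).
by case: Z => // x [|y Z] // [].
Qed.

Lemma size_two d m k i Y : 1 <= m -> persistent d m k i Y ->
  (forall x, x \in Y -> 0 < x) -> 1 < size Y.
Proof.
move=> Hm Hp Hpos; have [L [HL [Ws [HWs HWst HWl HWf]]]] := persistent_large Hp.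
case: Ws HWs HWst HWl HWf => [|W Ws] /=; first by move=> E; move: Hm; rewrite -E.
move=> _ Hst HWl HWf.
have [HW HWs] := st_head Hst.
have HWL : {subset W <= Y} by move=> x Hx; apply: HL; rewrite -HWf mem_cat Hx.
have := wl_two (HWl W (mem_head _ _)) HW (fun x Hx => Hpos x (HWL x Hx)).
move=> H2; apply: leq_trans H2 _; apply: uniq_leq_size => //.
exact: sorted_uniq ltn_trans ltnn _ HWs.
Qed.

Lemma flat_ne Xs : is_stack Xs -> Xs != [::] -> flatten Xs != [::].
Proof.
case: Xs => // X Xs Hst _; have [HX _] := st_head Hst.
by case: X HX {Hst}.
Qed.

Lemma pairs d m k i : 1 <= m -> forall M Xs, size Xs = (2 * M).+1 -> is_stack Xs ->
  (forall X, X \in Xs -> persistent d m k i.+1 X) ->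
  exists Ys, [/\ size Ys = M.+1, is_stack Ys, (forall Y, Y \in Ys -> persistent d m k i Y),
     {subset flatten Ys <= flatten Xs} & good k (flatten Xs) (flatten Ys)].
Proof.
move=> Hm M; elim: M => [|M IH] Xs.
  case: Xs => [|X [|]] // _ Hst Hp.
  have [Y [HYs HYne HYsub HYp HYg]] := Hp X (mem_head _ _).
  exists [:: Y]; split => //.
  - apply: st_cons => //; by split.
  - by move=> Y'; rewrite inE => /eqP ->.
  - by move=> x; rewrite /= !cats0; apply: HYsub.
  - by rewrite /= !cats0.
case: Xs => [|X0 [|X1 Xs]] //= Hsz Hst Hp.
have Hsz' : size Xs = (2 * M).+1 by move: Hsz; rewrite mulnS; case.
have Hst1 := st_tail Hst; have Hst2 := st_tail Hst1.
have Hp' : forall X, X \in Xs -> persistent d m k i.+1 X.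
  by move=> X HX; apply: Hp; rewrite !inE HX !orbT.
have [Ys [HYs HYst HYp HYsub HYg]] := IH Xs Hsz' Hst2 Hp'.
have [Y0 [HY0s HY0ne HY0sub HY0p HY0g]] := Hp X0 (mem_head _ _).
have HX1in : X1 \in [:: X0, X1 & Xs] by rewrite !inE eqxx orbT.
have [Y1 [HY1s HY1ne HY1sub HY1p HY1g]] := Hp X1 HX1in.
have [HX0 HX0s] := st_head Hst.
have [HX1 HX1s] := st_head Hst1.
have HXsne : Xs != [::] by case: (Xs) Hsz'.
have HYsne : Ys != [::] by case: (Ys) HYs.
have Hlast0 : forall y, y \in X1 ++ flatten Xs -> last 0 X0 < y.
  by move=> y Hy; apply: st_cons_inv Hst _.
have HY1two : 1 < size Y1.
  apply: size_two Hm HY1p _ => x Hx; apply: leq_ltn_trans (leq0n _) (Hlast0 x _).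
  by rewrite mem_cat HY1sub.
exists (Y0 :: Ys); split.
- by rewrite /= HYs.
- apply: st_cons => // y Hy.
  apply: leq_ltn_trans (srt_le_last HX0s (HY0sub _ (last_in HY0ne))) _.
  by apply: Hlast0; rewrite mem_cat HYsub ?orbT.
- by move=> Y; rewrite inE => /orP[/eqP ->|/HYp].
- move=> x; rewrite /= !mem_cat => /orP[/HY0sub ->//|/HYsub ->]; by rewrite !orbT.
- have Hs := st_sorted Hst.
  have Hf1 := flat_ne Hst2 HXsne.
  have Hf2 := st_sorted HYst.
  have Hf3 := flat_ne HYst HYsne.
  exact: (@glue k X0 X1 (flatten Xs) Y0 Y1 (flatten Ys) Hs HX0 HX1 Hf1 HY0s HY0ne HY0sub HY1two
     Hf2 Hf3 HYsub HY0g HY1g HYg).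
Qed.

Unset Implicit Arguments.

Theorem lemma2p10 (d m n k i : nat) (Xs : seq (seq nat)) :
  1 <= d -> 1 <= m -> 1 <= n -> 1 <= k ->
  is_stack Xs ->
  size Xs = 2 ^ i * n - 2 ^ i + 1 ->
  (forall X, X \in Xs -> persistent d m k i X) ->
  persistent d (m * n) k i (flatten Xs).
Proof.
elim: i n Xs => [|i IH] n Xs Hd Hm Hn Hk Hst Hsz Hp /=.
  have := large_cat Hst Hp.
  by rewrite Hsz expn0 mul1n subnK.
have Hsz' : size Xs = (2 * (2 ^ i * n - 2 ^ i)).+1.
  by rewrite Hsz expnS -mulnA mulnBr addn1.
have [Ys [HYs HYst HYp HYsub HYg]] := pairs Hm Hsz' Hst Hp.
have HYs' : size Ys = 2 ^ i * n - 2 ^ i + 1 by rewrite HYs addn1.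
have HpY := IH n Ys Hd Hm Hn Hk HYst HYs' HYp.
exists (flatten Ys); split => //.
- exact: st_sorted.
- by apply: flat_ne => //; case: (Ys) HYs.
Qed.
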